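(* Let $A$ be an $n\times n$ Bott matrix, $M=M(A)$ and $\Gamma=\pi_1(M)$. Then $$H_1(\Gamma)\cong\mathbb{F}_2^{\,n-b_1}\oplus\mathbb{Z}^{b_1},$$ where $b_1$ is the first Betti number of $M$.
   Context: A Bott matrix is a strictly upper triangular matrix $A=[a_{ij}]\in\mathbb{F}_2^{n\times n}$. The group $C_2^n=\langle c_1,\dots,c_n\rangle$ acts freely on the torus $T^n=(S^1)^n\subset\mathbb{C}^n$ by $$c_i\cdot(z_1,\dots,z_n)=(z_1,\dots,z_{i-1},-z_i,c_{i,i+1}(z_{i+1}),\dots,c_{i,n}(z_n)),$$ where $c_{i,j}(z)=z$ if $a_{ij}=0$ and $c_{i,j}(z)=\bar z$ if $a_{ij}=1$. The real Bott manifold is $M(A)=T^n/C_2^n$. *)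

(* Defs.v *)
From HB Require Import structures.
From mathcomp Require Import all_boot all_order all_algebra.
Set Implicit Arguments. Unset Strict Implicit. Unset Printing Implicit Defensive.
Import Order.TTheory GRing.Theory Num.Theory.
Local Open Scope ring_scope.

Definition is_bott (n : nat) (A : 'M['F_2]_n) : Prop :=
  forall i j : 'I_n, (j <= i)%N -> A i j = 0.

(** Affine maps of Q^n of the form x |-> (sgn(s_i) x_i + w_i)_i
    (diagonal sign matrix plus translation).  Pair (s, w). *)
Definition aff (n : nat) := ({ffun 'I_n -> bool} * {ffun 'I_n -> rat})%type.

Definition sgn (b : bool) : rat := if b then -1 else 1.

Definition aff_app n (g : aff n) (x : 'I_n -> rat) : 'I_n -> rat :=
  fun i => sgn (g.1 i) * x i + g.2 i.

Definition aff_mul n (g h : aff n) : aff n :=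
  ([ffun i => g.1 i (+) h.1 i], [ffun i => sgn (g.1 i) * h.2 i + g.2 i]).
Definition aff_one n : aff n := ([ffun _ => false], [ffun _ => 0]).
Definition aff_inv n (g : aff n) : aff n :=
  (g.1, [ffun i => - (sgn (g.1 i) * g.2 i)]).

(** Lift to R^n (coordinates z_j = exp(2 pi i x_j)) of the generator c_i:
    x_i |-> x_i + 1/2, x_j |-> -x_j for j > i with a_ij = 1, other coords fixed. *)
Definition bott_gen n (A : 'M['F_2]_n) (i : 'I_n) : aff n :=
  ([ffun j : 'I_n => (i < j)%N && (A i j == 1)], [ffun j : 'I_n => if j == i then 1 / 2 else 0]).

Definition transl n (j : 'I_n) : aff n :=
  ([ffun _ => false], [ffun k : 'I_n => if k == j then 1 else 0]).

(** Gamma = pi_1(M(A)): group of all lifts to R^n of the elements of C_2^n,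
    i.e. the group generated by the lifted generators and the integer translations. *)
Inductive Gamma n (A : 'M['F_2]_n) : aff n -> Prop :=
| Gamma_gen i : Gamma A (bott_gen A i)
| Gamma_tr j : Gamma A (transl j)
| Gamma_one : Gamma A (aff_one n)
| Gamma_mul g h : Gamma A g -> Gamma A h -> Gamma A (aff_mul g h)
| Gamma_inv g : Gamma A g -> Gamma A (aff_inv g).

Inductive commGamma n (A : 'M['F_2]_n) : aff n -> Prop :=
| comm_gen g h : Gamma A g -> Gamma A h ->
    commGamma A (aff_mul (aff_mul (aff_inv g) (aff_inv h)) (aff_mul g h))
| comm_one : commGamma A (aff_one n)
| comm_mul g h : commGamma A g -> commGamma A h -> commGamma A (aff_mul g h)
| comm_inv g : commGamma A g -> commGamma A (aff_inv g).

Definition homQ n (A : 'M['F_2]_n) (f : aff n -> rat) : Prop :=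
  forall g h, Gamma A g -> Gamma A h -> f (aff_mul g h) = f g + f h.

Definition homQ_indep n (A : 'M['F_2]_n) m (f : 'I_m -> aff n -> rat) : Prop :=
  forall c : 'I_m -> rat,
    (forall g, Gamma A g -> \sum_(k < m) c k * f k g = 0) -> forall k, c k = 0.

(** b = first Betti number of M(A) = dim_Q H^1(M;Q) = dim_Q Hom(Gamma, Q)
    (M(A) is aspherical with fundamental group Gamma). *)
Definition betti1 n (A : 'M['F_2]_n) (b : nat) : Prop :=
  (exists f : 'I_b -> aff n -> rat, (forall k, homQ A (f k)) /\ homQ_indep A f) /\
  (forall m (f : 'I_m -> aff n -> rat),
      (forall k, homQ A (f k)) -> homQ_indep A f -> (m <= b)%N).

(* Main.v *)
Require Import Defs.
From HB Require Import structures.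
From mathcomp Require Import all_boot all_order all_algebra.
From mathcomp Require Import ring lra zify.
Import Order.TTheory GRing.Theory Num.Theory.
Local Open Scope ring_scope.
Set Implicit Arguments. Unset Strict Implicit. Unset Printing Implicit Defensive.

Lemma sgnX a b : sgn (a (+) b) = sgn a * sgn b.
Proof. by case: a; case: b; rewrite /sgn /= ?mulN1r ?opprK ?mul1r. Qed.
Lemma sgn2 a : sgn a * sgn a = 1.
Proof. by case: a; rewrite /sgn ?mulN1r ?opprK ?mul1r. Qed.

Lemma aff_eq n (g h : aff n) : (forall i, g.1 i = h.1 i) -> (forall i, g.2 i = h.2 i) -> g = h.
Proof. case: g h => [s w] [s' w'] /= H1 H2. by congr pair; apply/ffunP. Qed.

Lemma amulA n (g h k : aff n) : aff_mul g (aff_mul h k) = aff_mul (aff_mul g h) k.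
Proof.
apply: aff_eq => i; rewrite /aff_mul /= !ffunE /=; first by rewrite addbA.
rewrite sgnX; ring.
Qed.
Lemma amul1g n (g : aff n) : aff_mul (aff_one n) g = g.
Proof. by apply: aff_eq => i; rewrite /aff_mul /= !ffunE /= ?mul1r ?addr0. Qed.
Lemma amulg1 n (g : aff n) : aff_mul g (aff_one n) = g.
Proof. by apply: aff_eq => i; rewrite /aff_mul /= !ffunE /= ?addbF ?mulr0 ?add0r. Qed.
Lemma amulVg n (g : aff n) : aff_mul (aff_inv g) g = aff_one n.
Proof. by apply: aff_eq => i; rewrite /aff_mul /= !ffunE /= ?addbb ?addrN. Qed.
Lemma amulgV n (g : aff n) : aff_mul g (aff_inv g) = aff_one n.
Proof. apply: aff_eq => i; rewrite /aff_mul /= !ffunE /= ?addbb //.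
by rewrite mulrN mulrA sgn2 mul1r addNr. Qed.
Lemma ainvK n (g : aff n) : aff_inv (aff_inv g) = g.
Proof. apply: aff_eq => i; rewrite /aff_inv /= ?ffunE //.
by rewrite mulrN mulrA sgn2 mul1r opprK. Qed.

Lemma ss n (A : 'M['F_2]_n) j : aff_mul (bott_gen A j) (bott_gen A j) = transl j.
Proof.
apply: aff_eq => k; rewrite /aff_mul /bott_gen /transl /= !ffunE /= ?addbb //.
have [->|nkj] := eqVneq k j; last by rewrite mulr0 addr0.
rewrite ltnn /= /sgn; lra.
Qed.

Lemma st n (A : 'M['F_2]_n) (i j : 'I_n) : (i < j)%N -> A i j = 1 ->
  aff_mul (bott_gen A i) (transl j) = aff_mul (aff_inv (transl j)) (bott_gen A i).
Proof.
move=> lij Aij.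
apply: aff_eq => k; rewrite /aff_mul /aff_inv /bott_gen /transl /= !ffunE /= ?addbF //.
have nij : i != j by rewrite neq_ltn lij.
have nji : (j == i) = false by rewrite eq_sym (negbTE nij).
have [->|nkj] := eqVneq k j.
  by rewrite lij Aij eqxx nji /sgn /=; lra.
by rewrite /sgn /=; lra.
Qed.

Lemma commst n (A : 'M['F_2]_n) (i j : 'I_n) : (i < j)%N -> A i j = 1 ->
  aff_mul (aff_mul (aff_inv (bott_gen A j)) (aff_inv (bott_gen A i)))
          (aff_mul (bott_gen A j) (bott_gen A i)) = aff_inv (transl j).
Proof.
move=> lij Aij.
have nij : i != j by rewrite neq_ltn lij.
have nji : (j == i) = false by rewrite eq_sym (negbTE nij).
have lji : (j < i)%N = false by apply/negbTE; rewrite -leqNgt ltnW.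
apply: aff_eq => k; rewrite /aff_mul /aff_inv /bott_gen /transl /= !ffunE /=.
  by case: ((i < k)%N && _); case: ((j < k)%N && _).
have [->|nkj] := eqVneq k j.
  rewrite lij Aij ltnn eqxx /= nji /sgn /=; lra.
have [->|nki] := eqVneq k i.
  rewrite lji ltnn /sgn /=; lra.
rewrite /sgn; case: ((i < k)%N && _); case: ((j < k)%N && _); rewrite /=; lra.
Qed.

Lemma F2_addeq1 (x y : 'F_2) : (x + y == 1) = (x == 1) (+) (y == 1).
Proof. by case: x => [[|[|//]] ?]; case: y => [[|[|//]] ?]. Qed.
Lemma F2_opp (x : 'F_2) : - x = x.
Proof. by case: x => [[|[|//]] ?]; apply/val_inj. Qed.

Definition kk n (g : aff n) (i : 'I_n) : int := numq (2 * g.2 i).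
Definition par n (g : aff n) (i : 'I_n) : 'F_2 := (kk g i)%:~R.
Definition sgnz (b : bool) : int := if b then -1 else 1.
Lemma sgnzE b : (sgnz b)%:~R = sgn b :> rat.
Proof. by case: b. Qed.

Definition Inv n (A : 'M['F_2]_n) (g : aff n) :=
  (forall i, (kk g i)%:~R = 2 * g.2 i) /\
  (forall k, g.1 k = (\sum_(i < n | (i < k)%N && (A i k == 1)) par g i == 1)).

Lemma kk_mul n (A : 'M['F_2]_n) g h i : Inv A g -> Inv A h ->
  kk (aff_mul g h) i = sgnz (g.1 i) * kk h i + kk g i.
Proof.
move=> [Hg _] [Hh _]; rewrite /kk /aff_mul /= ffunE.
have -> : 2 * (sgn (g.1 i) * h.2 i + g.2 i) = (sgnz (g.1 i) * kk h i + kk g i)%:~R.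
  by rewrite intrD intrM sgnzE Hh Hg; ring.
by rewrite numq_int.
Qed.

Lemma kk_inv n (A : 'M['F_2]_n) g i : Inv A g ->
  kk (aff_inv g) i = - (sgnz (g.1 i) * kk g i).
Proof.
move=> [Hg _]; rewrite /kk /aff_inv /= ffunE.
have -> : 2 * - (sgn (g.1 i) * g.2 i) = (- (sgnz (g.1 i) * kk g i))%:~R.
  by rewrite intrN intrM sgnzE Hg; ring.
by rewrite numq_int.
Qed.

Lemma par_sgn b (z : int) : ((sgnz b * z)%:~R : 'F_2) = z%:~R.
Proof. by case: b; rewrite /sgnz ?mulN1r ?mul1r // intrN F2_opp. Qed.

Lemma Inv_mul n (A : 'M['F_2]_n) g h : Inv A g -> Inv A h -> Inv A (aff_mul g h).
Proof.
move=> Ig Ih; split => [i|k].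
  rewrite (kk_mul i Ig Ih) intrD intrM sgnzE (proj1 Ig) (proj1 Ih) /aff_mul /= ffunE; ring.
have pm i : par (aff_mul g h) i = par h i + par g i.
  by rewrite /par (kk_mul i Ig Ih) intrD par_sgn.
rewrite /aff_mul /= ffunE (proj2 Ig) (proj2 Ih).
under eq_bigr do rewrite pm.
by rewrite big_split /= F2_addeq1 addbC.
Qed.

Lemma Inv_inv n (A : 'M['F_2]_n) g : Inv A g -> Inv A (aff_inv g).
Proof.
move=> Ig; split => [i|k].
  rewrite (kk_inv i Ig) intrN intrM sgnzE (proj1 Ig) /aff_inv /= ffunE; ring.
have pm i : par (aff_inv g) i = par g i.
  by rewrite /par (kk_inv i Ig) intrN F2_opp par_sgn.
rewrite /aff_inv /= (proj2 Ig).
by under eq_bigr do rewrite pm.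
Qed.

Lemma Inv_one n (A : 'M['F_2]_n) : Inv A (aff_one n).
Proof.
have k0 i : kk (aff_one n) i = 0 by rewrite /kk /= ffunE mulr0 -(numq_int 0).
split => [i|k]; first by rewrite k0 /= ffunE mulr0.
rewrite ffunE big1 // => i _; by rewrite /par k0.
Qed.

Lemma Inv_tr n (A : 'M['F_2]_n) j : Inv A (transl j).
Proof.
have k0 i : kk (transl j) i = if i == j then 2 else 0.
  rewrite /kk /= ffunE; case: (i == j); rewrite ?mulr0 ?mulr1.
    exact: (numq_int 2).
  exact: (numq_int 0).
split => [i|k]; first by rewrite k0 /= ffunE; case: (i == j); rewrite ?mulr0 ?mulr1.
rewrite ffunE big1 // => i _; rewrite /par k0; case: (i == j) => //.
by apply/val_inj.
Qed.

Lemma kk_gen n (A : 'M['F_2]_n) j i : kk (bott_gen A j) i = (i == j)%:R.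
Proof.
rewrite /kk /= ffunE; case: (i == j); rewrite ?mulr0.
  by rewrite mulrC mulfVK //; exact: (numq_int 1).
exact: (numq_int 0).
Qed.

Lemma Inv_gen n (A : 'M['F_2]_n) j : Inv A (bott_gen A j).
Proof.
split => [i|k].
  by rewrite kk_gen /= ffunE; case: (i == j); rewrite ?mulr0 //= mulrC mulfVK.
have pg i : par (bott_gen A j) i = (i == j)%:R by rewrite /par kk_gen; case: (i == j).
rewrite ffunE; under eq_bigr do rewrite pg.
case P: ((j < k)%N && (A j k == 1)).
  rewrite (bigD1 j) //= eqxx big1 ?addr0 // => i /andP [_ /negbTE ->] //.
rewrite big1 // => i Pi; have -> : (i == j) = false; last by [].
by apply/negbTE; apply/eqP => eij; rewrite eij P in Pi.
Qed.

Lemma Inv_Gamma n (A : 'M['F_2]_n) g : Gamma A g -> Inv A g.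
Proof.
elim => [i|j||g1 h1 _ I1 _ I2|g1 _ I1].
- exact: Inv_gen.
- exact: Inv_tr.
- exact: Inv_one.
- exact: Inv_mul.
- exact: Inv_inv.
Qed.

Definition zc n (A : 'M['F_2]_n) (j : 'I_n) : bool :=
  [forall i : 'I_n, ~~ ((i < j)%N && (A i j == 1))].

Lemma zc_false n (A : 'M['F_2]_n) g j : Gamma A g -> zc A j -> g.1 j = false.
Proof.
move=> /Inv_Gamma [_ H] /forallP Z; rewrite H big_pred0 // => i.
exact/negbTE/Z.
Qed.

Lemma nzc n (A : 'M['F_2]_n) j : ~~ zc A j -> exists2 i : 'I_n, (i < j)%N & A i j = 1.
Proof. by move/forallPn => [i]; rewrite negbK => /andP [? /eqP ?]; exists i. Qed.

Lemma homQ_zero n (A : 'M['F_2]_n) (F : aff n -> rat) : homQ A F ->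
  (forall j, zc A j -> F (bott_gen A j) = 0) -> forall g, Gamma A g -> F g = 0.
Proof.
move=> hF H0.
have F1 : F (aff_one n) = 0.
  have := hF _ _ (Gamma_one A) (Gamma_one A); rewrite amul1g => E.
  by apply/eqP; rewrite -(addrI (F (aff_one n)) (etrans (addr0 _) E)).
have FV g : Gamma A g -> F (aff_inv g) = - F g.
  move=> Gg; have := hF _ _ (Gamma_inv Gg) Gg; rewrite amulVg F1 => /eqP.
  by rewrite eq_sym addr_eq0 => /eqP.
have Fs i : F (bott_gen A i) = 0.
  case Zi: (zc A i); first exact: H0.
  have [k lki Aki] := nzc (negbT Zi).
  have Ft : F (transl i) = 0.
    have := congr1 F (st lki Aki).
    rewrite !hF; try by repeat constructor.
    rewrite FV; last exact: Gamma_tr. by move=> E; lra.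
  have := congr1 F (ss A i); rewrite hF; try exact: Gamma_gen. rewrite Ft => E.
  lra.
move=> g0; elim => [i|j||g h Gg Eg Gh Eh|g Gg Eg].
- exact: Fs.
- rewrite -(ss A j) hF; try exact: Gamma_gen. by rewrite Fs addr0.
- exact: F1.
- by rewrite hF // Eg Eh addr0.
- by rewrite FV // Eg oppr0.
Qed.

Definition Zs n (A : 'M['F_2]_n) : {set 'I_n} := [set j | zc A j].

Lemma betti_Z n (A : 'M['F_2]_n) : betti1 A #|Zs A|.
Proof.
split.
  exists (fun (k : 'I_#|Zs A|) (g : aff n) => g.2 (enum_val k)); split.
    move=> k g h Gg Gh; rewrite /aff_mul /= ffunE.
    have Zk : zc A (enum_val k) by have := enum_valP k; rewrite inE.
    by rewrite (zc_false Gg Zk) /sgn mul1r addrC.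
  move=> c H k0; have := H _ (Gamma_gen A (enum_val k0)).
  rewrite (bigD1 k0) //= big1 ?addr0.
    by rewrite ffunE eqxx => /eqP; rewrite mulf_eq0 => /orP [/eqP //|].
  by move=> k nk; rewrite ffunE (inj_eq enum_val_inj) (negbTE nk) mulr0.
move=> m f hf ind.
pose M := \matrix_(k < m, l < #|Zs A|) f k (bott_gen A (enum_val l)).
have rf : row_free M.
  apply: inj_row_free => v vM.
  have H : forall g, Gamma A g -> \sum_(k < m) v 0 k * f k g = 0.
    apply: homQ_zero.
      move=> g h Gg Gh; rewrite -big_split /=; apply: eq_bigr => k _.
      by rewrite hf // mulrDr.
    move=> j Zj.
    have Zj' : j \in Zs A by rewrite inE.
    rewrite -(enum_rankK_in Zj' Zj').
    move/rowP: vM => /(_ (enum_rank_in Zj' j)).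
    rewrite !mxE => E; rewrite -[X in _ = X]E; apply: eq_bigr => k _; by rewrite mxE.
  apply/rowP => k; rewrite mxE; exact: (ind _ H).
by rewrite -(eqP rf); exact: rank_leq_col.
Qed.

Lemma F2_even (z : int) : (z%:~R : 'F_2) = 0 -> exists y : int, z = 2 * y.
Proof.
have ch : 2%N \in [pchar 'F_2] by apply: pchar_Fp.
case: z => m; rewrite ?NegzE ?intrN.
  move=> /eqP; rewrite -(dvdn_pcharf ch) => /dvdnP [k ->].
  by exists k; rewrite PoszM mulrC.
move=> /eqP; rewrite oppr_eq0 -(dvdn_pcharf ch) => /dvdnP [k ->].
by exists (- (k : int)); rewrite PoszM mulrN mulrC.
Qed.

Lemma cardNZ n (A : 'M['F_2]_n) : #|~: Zs A| = (n - #|Zs A|)%N.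
Proof. have := cardsC (Zs A); rewrite card_ord => E; by rewrite -[X in (X - _)%N]E addKn. Qed.

Definition nzv n (A : 'M['F_2]_n) (k : 'I_(n - #|Zs A|)) : 'I_n :=
  enum_val (cast_ord (esym (cardNZ A)) k).
Definition zv n (A : 'M['F_2]_n) (k : 'I_#|Zs A|) : 'I_n := enum_val k.
Arguments nzv {n} A k.
Arguments zv {n} A k.

Lemma nzvP n (A : 'M['F_2]_n) k : zc A (nzv A k) = false.
Proof. by have := enum_valP (cast_ord (esym (cardNZ A)) k); rewrite !inE => /negbTE. Qed.
Lemma zvP n (A : 'M['F_2]_n) k : zc A (zv A k).
Proof. by have := enum_valP k; rewrite !inE. Qed.
Lemma nzv_inj n (A : 'M['F_2]_n) : injective (nzv A).
Proof. by move=> k1 k2 /enum_val_inj /cast_ord_inj. Qed.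
Lemma zv_inj n (A : 'M['F_2]_n) : injective (zv A).
Proof. exact: enum_val_inj. Qed.
Lemma nzv_surj n (A : 'M['F_2]_n) i : zc A i = false -> exists k, nzv A k = i.
Proof.
move=> Hi; have Hi' : i \in ~: Zs A by rewrite !inE Hi.
exists (cast_ord (cardNZ A) (enum_rank_in Hi' i)).
by rewrite /nzv cast_ordK enum_rankK_in.
Qed.
Lemma zv_surj n (A : 'M['F_2]_n) i : zc A i -> exists k, zv A k = i.
Proof.
move=> Hi; have Hi' : i \in Zs A by rewrite !inE Hi.
by exists (enum_rank_in Hi' i); rewrite /zv enum_rankK_in.
Qed.

Definition phi n (A : 'M['F_2]_n) (g : aff n) : ('rV['F_2]_(n - #|Zs A|) * 'rV[int]_#|Zs A|)%type :=
  (\row_k par g (nzv A k), \row_k kk g (zv A k)).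
Arguments phi {n} A g.

Lemma par_mul n (A : 'M['F_2]_n) g h i : Inv A g -> Inv A h ->
  par (aff_mul g h) i = par h i + par g i.
Proof. by move=> Ig Ih; rewrite /par (kk_mul i Ig Ih) intrD par_sgn. Qed.

Lemma phi_mul n (A : 'M['F_2]_n) g h : Gamma A g -> Gamma A h ->
  phi A (aff_mul g h) = phi A g + phi A h.
Proof.
move=> Gg Gh; have Ig := Inv_Gamma Gg; have Ih := Inv_Gamma Gh.
congr pair; apply/rowP => k; rewrite !mxE.
  by rewrite (par_mul _ Ig Ih) addrC.
by rewrite (kk_mul _ Ig Ih) (zc_false Gg (zvP k)) /sgnz mul1r addrC.
Qed.

Lemma phi_one n (A : 'M['F_2]_n) : phi A (aff_one n) = 0.
Proof.
have := phi_mul (Gamma_one A) (Gamma_one A); rewrite amul1g => E.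
by apply: (addrI (phi A (aff_one n))); rewrite addr0 -E.
Qed.

Lemma phi_inv n (A : 'M['F_2]_n) g : Gamma A g -> phi A (aff_inv g) = - phi A g.
Proof.
move=> Gg; have := phi_mul (Gamma_inv Gg) Gg; rewrite amulVg phi_one => /eqP.
by rewrite eq_sym addr_eq0 => /eqP.
Qed.

Definition tr n (u : {ffun 'I_n -> rat}) : aff n := ([ffun _ => false], u).

Lemma tr_mul n (u v : {ffun 'I_n -> rat}) : aff_mul (tr u) (tr v) = tr (u + v).
Proof. apply: aff_eq => i; rewrite /aff_mul /tr /= !ffunE //=; by rewrite /sgn mul1r addrC. Qed.
Lemma tr0 n : tr (0 : {ffun 'I_n -> rat}) = aff_one n.
Proof. by apply: aff_eq => i; rewrite /tr /= !ffunE. Qed.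

Definition ej n (j : 'I_n) (q : rat) : {ffun 'I_n -> rat} := [ffun k => if k == j then q else 0].

Lemma ej_add n (j : 'I_n) p q : ej j (p + q) = ej j p + ej j q.
Proof. by apply/ffunP => k; rewrite !ffunE; case: (k == j); rewrite ?addr0. Qed.

Lemma transl_ej n (j : 'I_n) : transl j = tr (ej j 1).
Proof. by apply: aff_eq => k; rewrite /tr /transl /ej /= ?ffunE. Qed.
Lemma transl_inv_ej n (j : 'I_n) : aff_inv (transl j) = tr (ej j (-1)).
Proof.
apply: aff_eq => k; rewrite /tr /transl /ej /aff_inv /= ?ffunE //.
by case: (k == j); rewrite /sgn mul1r ?oppr0.
Qed.

Lemma comm_transl n (A : 'M['F_2]_n) j : zc A j = false -> commGamma A (transl j).
Proof.
move=> Zj; have [i lij Aij] := nzc (negbT Zj).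
have := comm_gen (Gamma_gen A j) (Gamma_gen A i).
rewrite commst // => /comm_inv; by rewrite ainvK.
Qed.

Lemma comm_ej n (A : 'M['F_2]_n) j (z : int) : zc A j = false -> commGamma A (tr (ej j z%:~R)).
Proof.
move=> Zj; elim/int_rec: z => [|m IH|m IH].
- have -> : ej j (0%:~R) = 0 by apply/ffunP => k; rewrite !ffunE; case: (k == j).
  rewrite tr0; exact: comm_one.
- rewrite -addn1 PoszD intrD ej_add -tr_mul -transl_ej.
  exact: comm_mul IH (comm_transl Zj).
- rewrite -addn1 PoszD opprD intrD ej_add -tr_mul -transl_inv_ej.
  exact: comm_mul IH (comm_inv (comm_transl Zj)).
Qed.

Lemma comm_tr n (A : 'M['F_2]_n) (u : {ffun 'I_n -> rat}) :
  (forall i, exists z : int, u i = z%:~R) -> (forall i, zc A i -> u i = 0) ->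
  commGamma A (tr u).
Proof.
move=> Hint Hz.
have -> : u = \sum_i ej i (u i).
  apply/ffunP => k; rewrite sum_ffunE (bigD1 k) //= big1 ?addr0; first by rewrite ffunE eqxx.
  by move=> i nik; rewrite ffunE eq_sym (negbTE nik).
apply: (big_ind (fun x => commGamma A (tr x))).
- rewrite tr0; exact: comm_one.
- by move=> x y Hx Hy; rewrite -tr_mul; apply: comm_mul.
move=> i _; case Zi: (zc A i).
  rewrite Hz //.
  have -> : ej i 0 = 0 by apply/ffunP => k; rewrite !ffunE; case: (k == i).
  rewrite tr0; exact: comm_one.
have [z ->] := Hint i; exact: comm_ej.
Qed.

Lemma comm_Gamma n (A : 'M['F_2]_n) g : commGamma A g -> Gamma A g /\ phi A g = 0.
Proof.
elim => [g1 h1 G1 H1||g1 h1 _ [G1 E1] _ [H1 E2]|g1 _ [G1 E1]].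
- have Gi1 := Gamma_inv G1; have Hi1 := Gamma_inv H1.
  split; first by repeat apply: Gamma_mul.
  rewrite !phi_mul //; try by apply: Gamma_mul.
  by rewrite !phi_inv // addrACA addNr addNr addr0.
- by split; [exact: Gamma_one | exact: phi_one].
- by split; [exact: Gamma_mul | rewrite phi_mul // E1 E2 addr0].
- by split; [exact: Gamma_inv | rewrite phi_inv // E1 oppr0].
Qed.

Lemma ker_comm n (A : 'M['F_2]_n) g : Gamma A g -> phi A g = 0 -> commGamma A g.
Proof.
move=> Gg E; have [Ik Ip] := Inv_Gamma Gg.
have E1 := congr1 fst E; have E2 := congr1 snd E; rewrite /= in E1 E2.
have kk0 i : zc A i -> kk g i = 0.
  move=> Zi; have [k <-] := zv_surj Zi.
  by move/rowP: E2 => /(_ k); rewrite !mxE.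
have par0 i : par g i = 0.
  case Zi: (zc A i); first by rewrite /par kk0.
  have [k <-] := nzv_surj Zi.
  by move/rowP: E1 => /(_ k); rewrite !mxE.
have -> : g = tr g.2.
  apply: aff_eq => k //; rewrite /tr /= ffunE Ip big1 //.
apply: comm_tr.
  move=> i; have [y Hy] := F2_even (par0 i).
  exists y; have := Ik i; rewrite Hy intrM => H.
  have : (2 : rat) * g.2 i = 2 * y%:~R by rewrite -H.
  by move=> H2; lra.
move=> i Zi; have := Ik i; rewrite kk0 // => H; lra.
Qed.

Lemma par_gen n (A : 'M['F_2]_n) j i : par (bott_gen A j) i = (i == j)%:R.
Proof. by rewrite /par kk_gen; case: (i == j). Qed.

Lemma phi_surj n (A : 'M['F_2]_n) y : exists2 g, Gamma A g & phi A g = y.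
Proof.
pose S y := exists2 g, Gamma A g & phi A g = y.
have S0 : S 0 by exists (aff_one n); [exact: Gamma_one | exact: phi_one].
have Sadd a b : S a -> S b -> S (a + b).
  by move=> [g Gg <-] [h Gh <-]; exists (aff_mul g h); [exact: Gamma_mul | exact: phi_mul].
have Sopp a : S a -> S (- a).
  by move=> [g Gg <-]; exists (aff_inv g); [exact: Gamma_inv | exact: phi_inv].
have Snz k : S ('e_k, 0).
  exists (bott_gen A (nzv A k)); first exact: Gamma_gen.
  congr pair; apply/rowP => l; rewrite !mxE.
    by rewrite par_gen (inj_eq (@nzv_inj _ A)) eqxx /=.
  rewrite kk_gen; case: eqP => // E; have := zvP l; by rewrite E nzvP.
have Sz k : S (0, 'e_k).
  exists (bott_gen A (zv A k)); first exact: Gamma_gen.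
  congr pair; apply/rowP => l; rewrite !mxE.
    rewrite par_gen; case: eqP => // E; have := zvP k; by rewrite -E nzvP.
  by rewrite kk_gen (inj_eq (@zv_inj _ A)) eqxx /=.
case: y => u v.
have Sadd' a1 b1 a2 b2 : S (a1, b1) -> S (a2, b2) -> S (a1 + a2, b1 + b2).
  by move=> H1 H2; exact: (Sadd _ _ H1 H2).
rewrite -[u]addr0 -[v]add0r; apply: (Sadd').
  rewrite (row_sum_delta u).
  apply: (big_ind (fun x => S (x, 0))) => //.
    by move=> a b Ha Hb; have := Sadd' _ _ _ _ Ha Hb; rewrite addr0.
  move=> k _; case: (u 0 k) => [[|[|//]] ip].
    have -> : Ordinal ip = 0 by apply/val_inj.
    by rewrite scale0r.
  have -> : Ordinal ip = 1 by apply/val_inj.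
  by rewrite scale1r.
rewrite (row_sum_delta v).
apply: (big_ind (fun x => S (0, x))) => //.
  by move=> a b Ha Hb; have := Sadd' _ _ _ _ Ha Hb; rewrite addr0.
move=> k _; elim/int_rec: (v 0 k) => [|m IH|m IH].
- by rewrite scale0r.
- have -> : (m.+1 : int) = m%:Z + 1 by rewrite -addn1 PoszD.
  rewrite scalerDl scale1r.
  by have := Sadd' _ _ _ _ IH (Sz k); rewrite addr0.
- have -> : (- (m.+1 : int)) = - (m%:Z) - 1 by rewrite -addn1 PoszD opprD.
  rewrite scalerDl scaleN1r.
  by have := Sadd' _ _ _ _ IH (Sopp _ (Sz k)); rewrite /= ?oppr0 ?addr0.
Qed.

Theorem mainTheorem3 (n : nat) (A : 'M['F_2]_n) :
  is_bott A ->
  (exists b, betti1 A b) /\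
  forall b : nat, betti1 A b ->
    (b <= n)%N /\
    exists phi : aff n -> ('rV['F_2]_(n - b) * 'rV[int]_b)%type,
      (forall g h, Gamma A g -> Gamma A h -> phi (aff_mul g h) = phi g + phi h) /\
      (forall y, exists2 g, Gamma A g & phi g = y) /\
      (forall g, Gamma A g -> (phi g = 0 <-> commGamma A g)).
Proof.
move=> _; split; first by exists #|Zs A|; exact: betti_Z.
move=> b Hb.
have Eb : b = #|Zs A|.
  apply/eqP; rewrite eqn_leq; apply/andP; split.
  - have [[f [hf ind]] _] := Hb; exact: (proj2 (betti_Z A) _ f hf ind).
  - have [[f [hf ind]] _] := betti_Z A; exact: (proj2 Hb _ f hf ind).
subst b; split.
  by have := max_card (mem (Zs A)); rewrite card_ord.
exists (phi A); split; first exact: phi_mul.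
split; first exact: phi_surj.
move=> g Gg; split; first exact: ker_comm.
by case/comm_Gamma.
Qed.
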